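(* Let $n\geq 1$ and for $1\leq k\leq n$ let $c(k)$ denote the number of Boolean functions on $n$ variables that are canalizing for exactly $k$ variables. Then: for $1<k<n$, $c(k)=\sum_{r=k}^n\binom{r}{k}(-1)^{r-k}\binom{n}{r}2^{r+1}\bigl(2^{2^{n-r}}-1\bigr)$; for $1<k=n$, $c(n)=2+2^{n+1}$; for $1=k<n$, $c(1)=2n\bigl(2^{1+2^{n-1}}-3\bigr)+\sum_{r=2}^n r(-1)^{r-1}\binom{n}{r}2^{r+1}\bigl(2^{2^{n-r}}-1\bigr)$; for $1=k=n$, $c(1)=4$.
   Context: A Boolean function on $n$ variables is a map $f:\{0,1\}^n\to\{0,1\}$, variables indexed by $[n]=\{0,\dots,n-1\}$. $f$ is canalizing for variable $i$ if there exist $s,v\in\{0,1\}$ such that for all $x\in\{0,1\}^n$, $x_i=s$ implies $f(x)=v$. ''Canalizing for exactly $k$ variables'' means the set of $i\in[n]$ for which $f$ is canalizing for variable $i$ has exactly $k$ elements. *)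

(* Defs.v *)
From mathcomp Require Import all_boot all_order all_algebra.
Set Implicit Arguments. Unset Strict Implicit. Unset Printing Implicit Defensive.

Definition boolfun (n : nat) := {ffun {ffun 'I_n -> bool} -> bool}.

Definition canalizing (n : nat) (f : boolfun n) (i : 'I_n) : bool :=
  [exists s : bool, exists v : bool, forall x : {ffun 'I_n -> bool}, (x i == s) ==> (f x == v)].

Definition canal_vars (n : nat) (f : boolfun n) : {set 'I_n} :=
  [set i | canalizing f i].

Definition ccount (n k : nat) : nat :=
  #|[set f : boolfun n | #|canal_vars f| == k]|.

(* Main.v *)
Require Import Defs.
From mathcomp Require Import all_boot all_order all_algebra.
Set Implicit Arguments. Unset Strict Implicit. Unset Printing Implicit Defensive.

Lemma card_fix0 (T : finType) (X : {set T}) :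
  #|[set y : {ffun T -> bool} | [forall i in X, y i == false]]| = 2 ^ #|~: X|.
Proof.
transitivity (#|pffun_on false (~: X) (@predT bool)|); last first.
  by rewrite card_pffun_on (eq_card (B:=[pred b : bool | true])) // card_bool.
apply: eq_card => y; rewrite inE; apply/forall_inP/pffun_onP.
  move=> H; split; last by [].
  apply/subsetP => i; rewrite !inE; apply: contraR => /negPn iX.
  by rewrite (eqP (H i iX)).
move=> [/subsetP H _] i iX; apply/negPn/negP => /(H i); by rewrite inE iX.
Qed.

Lemma card_fix (T : finType) (X : {set T}) (c : T -> bool) :
  #|[set y : {ffun T -> bool} | [forall i in X, y i == c i]]| = 2 ^ #|~: X|.
Proof.
pose g (y : {ffun T -> bool}) := [ffun i => y i (+) c i].
have gK : involutive g by move=> y; apply/ffunP => i; rewrite !ffunE addbK.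
rewrite -(card_fix0 X) -(card_preimset _ (inv_inj gK)).
apply: eq_card => y; rewrite !inE; apply: eq_forallb => i.
by rewrite ffunE; case: (i \in X); case: (y i); case: (c i).
Qed.

Section Count.
Variable n : nat.
Notation inp := {ffun 'I_n -> bool}.

Definition cst (c : bool) : boolfun n := [ffun _ => c].
Definition consts : {set boolfun n} := [set cst false; cst true].
Definition AR (R : {set 'I_n}) := [set f : boolfun n | R \subset canal_vars f].
Definition B (R : {set 'I_n}) (s : inp) (v : bool) :=
  [set f : boolfun n | [forall x : inp, [exists i in R, x i == s i] ==> (f x == v)]].
Definition Pset (R : {set 'I_n}) := [set s : inp | [forall i in ~: R, s i == false]].

Lemma cst_canal c i : canalizing (cst c) i.
Proof. by apply/existsP; exists true; apply/existsP; exists c; apply/forallP => x; rewrite ffunE eqxx implybT. Qed.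

Lemma cst_inj : cst false != cst true.
Proof. apply/eqP => /ffunP /(_ [ffun=> false]); by rewrite !ffunE. Qed.

Lemma consts_AR R : consts \subset AR R.
Proof.
apply/subsetP => f; rewrite !inE => /orP [] /eqP ->; apply/subsetP => i _;
  rewrite inE; exact: cst_canal.
Qed.

Lemma sameV (f : boolfun n) i j a b v w : i != j ->
  [forall x : inp, (x i == a) ==> (f x == v)] -> [forall x : inp, (x j == b) ==> (f x == w)] -> v = w.
Proof.
move=> ij /forallP H1 /forallP H2.
pose x : inp := [ffun k => if k == i then a else b].
have xi : x i = a by rewrite ffunE eqxx.
have xj : x j = b by rewrite ffunE eq_sym (negbTE ij).
by move: (H1 x) (H2 x); rewrite xi xj !eqxx /= => /eqP <- /eqP.
Qed.

Lemma bothC (f : boolfun n) i a v :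
  [forall x : inp, (x i == a) ==> (f x == v)] -> [forall x : inp, (x i == ~~ a) ==> (f x == v)] -> f = cst v.
Proof.
move=> H1 H2; apply/ffunP => x; rewrite ffunE.
move: (forallP H1 x) (forallP H2 x); clear H1 H2.
by case: (x i); case: a => /implyP A1 /implyP A2; apply/eqP; [apply: A1|apply: A2|apply: A2|apply: A1].
Qed.

Lemma notconsts (f : boolfun n) : (f \notin consts) = [forall c, f != cst c].
Proof.
rewrite !inE negb_or; apply/andP/forallP => [[? ?] []|H] //.

Qed.

Lemma card_B R s v : #|B R s v| = 2 ^ (2 ^ (n - #|R|)).
Proof.
have -> : B R s v = [set y : boolfun n | [forall x in [set x : inp | [exists i in R, x i == s i]], y x == (fun _ => v) x]].
  by apply/setP => f; rewrite !inE; apply: eq_forallb => x; rewrite inE.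
rewrite card_fix; congr (_ ^ _).
have -> : ~: [set x : inp | [exists i in R, x i == s i]] = [set x : inp | [forall i in R, x i == ~~ s i]].
  apply/setP => x; rewrite !inE negb_exists; apply: eq_forallb => i.
  by case: (i \in R); case: (x i); case: (s i).
rewrite card_fix; congr (_ ^ _); have := cardsC R; rewrite card_ord; move: #|~: R| #|R| => a b <-; by rewrite addKn.
Qed.

Lemma card_B' R s v : R != set0 -> #|B R s v :\: consts| = 2 ^ (2 ^ (n - #|R|)) - 1.
Proof.
case/set0Pn => i0 Ri0.
rewrite cardsD card_B; congr (_ - _).
have -> : B R s v :&: consts = [set cst v]; last by rewrite cards1.
apply/setP => f; rewrite !inE; apply/idP/idP.
  move=> /andP [/forallP /(_ s) Hs Hc].
  have Hex : [exists i in R, s i == s i] by apply/existsP; exists i0; rewrite Ri0 eqxx.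
  move: Hs; rewrite Hex /= => /eqP fsv.
  by case/orP: Hc => /eqP Hf; rewrite Hf ffunE in fsv *; rewrite -fsv.
move/eqP => ->; apply/andP; split.
  by apply/forallP => x; rewrite ffunE eqxx implybT.
by case: v; rewrite eqxx ?orbT.
Qed.

Lemma card_Pset R : #|Pset R| = 2 ^ #|R|.
Proof. by rewrite card_fix setCK. Qed.

End Count.

Section Count2.
Variable n : nat.
Notation inp := {ffun 'I_n -> bool}.
Notation cst := (@cst n).
Notation consts := (@consts n).

Lemma BtoC (R : {set 'I_n}) (s : inp) v (f : boolfun n) i : f \in B R s v -> i \in R ->
  [forall x : inp, (x i == s i) ==> (f x == v)].
Proof.
rewrite inE => /forallP H iR; apply/forallP => x; apply/implyP => xi.
by apply: (implyP (H x)); apply/existsP; exists i; rewrite iR.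
Qed.

Lemma Bsub (R : {set 'I_n}) (s : inp) v (f : boolfun n) : f \in B R s v -> f \in AR R.
Proof.
move=> fB; rewrite inE; apply/subsetP => i iR; rewrite inE.
by apply/existsP; exists (s i); apply/existsP; exists v; apply: BtoC fB iR.
Qed.

Lemma B_uniq (R : {set 'I_n}) (s s' : inp) (v v' : bool) (f : boolfun n) : 1 < #|R| -> f \notin consts ->
  s \in Pset R -> s' \in Pset R -> f \in B R s v -> f \in B R s' v' -> s = s' /\ v = v'.
Proof.
move=> /card_gt1P [i [j [iR jR ij]]] fnc Ps Ps' fB fB'.
have vv : v = v' by apply: (sameV ij (BtoC fB iR) (BtoC fB' jR)).
subst v'; split => //; apply/ffunP => k.
case kR : (k \in R).
  apply/eqP; apply/negP => /negP skk.
  have e : s' k = ~~ s k by move: skk; case: (s k); case: (s' k).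
  have := bothC (BtoC fB kR); rewrite -e => /(_ (BtoC fB' kR)) fc.
  move: fnc; rewrite notconsts => /forallP /(_ v); by rewrite fc eqxx.
move: Ps Ps'; rewrite !inE => /forall_inP /(_ k) H /forall_inP /(_ k) H'.
by rewrite (eqP (H _)) ?(eqP (H' _)) // inE kR.
Qed.

Lemma B_exists (R : {set 'I_n}) (f : boolfun n) : 1 < #|R| -> f \notin consts -> f \in AR R ->
  exists s, exists v, (s \in Pset R) /\ f \in B R s v.
Proof.
move=> /card_gt1P [i0 [j0 [i0R _ _]]] fnc; rewrite inE => /subsetP fA.
pose s : inp := [ffun k => (k \in R) && [exists v, [forall x : inp, (x k == true) ==> (f x == v)]]].
have Hk : forall k, k \in R -> exists v, [forall x : inp, (x k == s k) ==> (f x == v)].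
  move=> k kR; rewrite /s ffunE kR /=.
  case E : [exists v, _]; first by case/existsP: E => v Hv; exists v.
  move: (fA k kR); rewrite inE => /existsP [a /existsP [v Hv]].
  case: a Hv => Hv; last by exists v.
  by move: E; rewrite (_ : [exists v, _]) //; apply/existsP; exists v.
have [v0 H0] := Hk i0 i0R.
exists s, v0; split.
  by rewrite inE; apply/forall_inP => k; rewrite inE ffunE => /negbTE ->.
rewrite inE; apply/forallP => x; apply/implyP => /exists_inP [i iR /eqP xi].
have [vi Hi] := Hk i iR.
have -> : v0 = vi.
  case: (eqVneq i0 i) => [e|ne]; first subst i0.
    by have := forallP H0 x; have := forallP Hi x; rewrite xi eqxx /= => /eqP -> /eqP.
  exact: sameV ne H0 Hi.
by have := forallP Hi x; rewrite xi eqxx.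
Qed.

Lemma card_sumb (T : finType) (A : {set T}) : #|A| = \sum_(x : T) (x \in A).
Proof. by rewrite -sum1_card big_mkcond; apply: eq_bigr => x _; case: (x \in A). Qed.

Lemma per_f (R : {set 'I_n}) (f : boolfun n) : 1 < #|R| ->
  ((f \in AR R :\: consts) : nat) = \sum_(s in Pset R) \sum_(v : bool) (f \in B R s v :\: consts : nat).
Proof.
move=> R2.
case fin : (f \in AR R :\: consts); last first.
  rewrite big1 // => s _; rewrite big1 // => v _.
  case fB : (f \in B R s v :\: consts) => //.
  move: fB; rewrite inE => /andP [fnc /Bsub fA]; by rewrite inE fnc fA in fin.
move: fin; rewrite inE => /andP [fnc fA].
have [s0 [v0 [P0 B0]]] := B_exists R2 fnc fA.
rewrite (bigD1 s0) //= [X in _ + X]big1 ?addn0; last first.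
  move=> s /andP [Ps ss0]; rewrite big1 // => v _; rewrite inE fnc /=.
  case fB : (f \in B R s v) => //; have [e _] := B_uniq R2 fnc Ps P0 fB B0.
  by rewrite e eqxx in ss0.
rewrite (bigD1 v0) //= [X in _ + X]big1 ?addn0; first by rewrite inE fnc B0.
move=> v vv0; rewrite inE fnc /=.
case fB : (f \in B R s0 v) => //; have [_ e] := B_uniq R2 fnc P0 P0 fB B0.
by rewrite e eqxx in vv0.
Qed.

Lemma card_AR2 (R : {set 'I_n}) : 1 < #|R| ->
  #|AR R| = 2 + 2 ^ #|R| * (2 * (2 ^ (2 ^ (n - #|R|)) - 1)).
Proof.
move=> R2.
have Rn0 : R != set0 by rewrite -card_gt0 ltnW.
rewrite -(cardsID consts) (setIidPr (consts_AR R)) cards2 cst_inj; congr (_ + _).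
rewrite card_sumb (eq_bigr _ (fun f _ => per_f f R2)) exchange_big /=.
rewrite -card_Pset -sum_nat_const; apply: eq_bigr => s _.
rewrite exchange_big /= big_bool /= -!card_sumb !card_B' //.
by rewrite addnn -mul2n.
Qed.

End Count2.

Section Count1.
Variable n : nat.
Notation inp := {ffun 'I_n -> bool}.
Variable i : 'I_n.

Definition B1 (b v : bool) := [set f : boolfun n | [forall x : inp, (x i == b) ==> (f x == v)]].
Definition H (b : bool) := B1 b false :|: B1 b true.

Lemma card_B1 b v : #|B1 b v| = 2 ^ (2 ^ (n - 1)).
Proof.
have -> : B1 b v = [set y : boolfun n | [forall x in [set x : inp | x i == b], y x == (fun _ => v) x]].
  by apply/setP => f; rewrite !inE; apply: eq_forallb => x; rewrite inE.
rewrite card_fix; congr (_ ^ _).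
have -> : ~: [set x : inp | x i == b] = [set x : inp | [forall k in [set i], x k == ~~ b]].
  apply/setP => x; rewrite !inE; apply/idP/forall_inP => [Hx k|Hx].
    by rewrite inE => /eqP ->; move: Hx; case: (x i); case: b.
  by move: (Hx i (set11 i)); clear Hx; case: (x i); case: b.
by rewrite card_fix cardsC1 card_ord subn1.
Qed.

Lemma card_H b : #|H b| = 2 * 2 ^ (2 ^ (n - 1)).
Proof.
have := cardsUI (B1 b false) (B1 b true); rewrite !card_B1.
have -> : B1 b false :&: B1 b true = set0.
  apply/setP => f; rewrite !inE; apply/negP => /andP [/forallP /(_ [ffun=> b]) h1 /forallP /(_ [ffun=> b]) h2].
  by move: h1 h2; rewrite ffunE eqxx /= => /eqP -> .
by rewrite cards0 addn0 addnn -mul2n.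
Qed.

Definition g (p : bool * bool) : boolfun n := [ffun x : inp => if x i then p.2 else p.1].

Lemma g_inj : injective g.
Proof.
move=> [a b] [c d] /ffunP E.
have := E [ffun=> true]; have := E [ffun=> false]; rewrite !ffunE /= => -> -> //.
Qed.

Lemma HI : H true :&: H false = g @: setT.
Proof.
apply/setP => f; apply/idP/imsetP.
  rewrite !inE => /andP [h1 h0].
  have [v1 hv1] : exists v, [forall x : inp, (x i == true) ==> (f x == v)].
    by case/orP: h1 => ?; [exists false | exists true].
  have [v0 hv0] : exists v, [forall x : inp, (x i == false) ==> (f x == v)].
    by case/orP: h0 => ?; [exists false | exists true].
  exists (v0, v1) => //; apply/ffunP => x; rewrite ffunE /=.
  have := forallP hv1 x; have := forallP hv0 x.
  by case: (x i) => /= ? ?; apply/eqP.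
move=> [[a b] _ ->]; rewrite !inE.
apply/andP; split; apply/orP; [case: b; [right|left] | case: a; [right|left]];
  apply/forallP => x; rewrite ffunE /=; apply/implyP => /eqP -> //.
Qed.

Lemma card_AR1 : #|AR [set i]| + 4 = 4 * 2 ^ (2 ^ (n - 1)).
Proof.
have -> : AR [set i] = H true :|: H false.
  apply/setP => f; rewrite !inE sub1set inE /canalizing.
  apply/existsP/orP => [[s /existsP [v Hv]]|].
    by case: s Hv; case: v => Hv; [left|left|right|right]; apply/orP; [right|left|right|left].
  by case=> /orP [] Hv; [exists true|exists true|exists false|exists false]; apply/existsP;
    [exists false|exists true|exists false|exists true].
have := cardsUI (H true) (H false); rewrite HI card_imset; last exact: g_inj.
rewrite cardsT card_prod card_bool !card_H => ->.
by rewrite -mulnDl.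
Qed.

End Count1.

Lemma sumAR n r :
  \sum_(R : {set 'I_n} | #|R| == r) #|AR R| = \sum_(j < n.+1) 'C(j, r) * ccount n j.
Proof.
transitivity (\sum_(f : boolfun n) 'C(#|canal_vars f|, r)).
  rewrite (eq_bigr _ (fun R _ => card_sumb (AR R))) exchange_big /=.
  apply: eq_bigr => f _; rewrite -cards_draws card_sumb big_mkcond /=.
  by apply: eq_bigr => R _; rewrite !inE andbC; case: (#|R| == r).
transitivity (\sum_(f : boolfun n) \sum_(j < n.+1) 'C(j, r) * (#|canal_vars f| == j)).
  apply: eq_bigr => f _.
  have lt : #|canal_vars f| < n.+1 by rewrite ltnS -[X in _ <= X](card_ord n) max_card.
  rewrite (bigD1 (Ordinal lt)) //= eqxx muln1 big1 ?addn0 // => j /negbTE jn.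
  rewrite (_ : (#|canal_vars f| == j) = false) ?muln0 //.
  by apply/negbTE; apply: contraFneq jn => e; apply/eqP/val_inj.
rewrite exchange_big /=; apply: eq_bigr => j _.
by rewrite /ccount card_sumb big_distrr /=; apply: eq_bigr => f _; rewrite inE.
Qed.
From mathcomp Require Import ring lra zify.
Import GRing.Theory.

Lemma bin_mul j r k : k <= r -> r <= j -> 'C(j, r) * 'C(r, k) = 'C(j, k) * 'C(j - k, r - k).
Proof.
move=> kr rj.
have e1 := bin_fact rj. have e2 := bin_fact kr.
have e3 : r - k <= j - k by lia.
have {e3}e3 := bin_fact e3.
have e4 : k <= j by lia.
have {e4}e4 := bin_fact e4.
have jr : j - k - (r - k) = j - r by lia.
rewrite jr in e3.
apply/eqP; rewrite -(eqn_pmul2r (_ : 0 < k`! * (r - k)`! * (j - r)`!)); last first.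
  by rewrite !muln_gt0 !fact_gt0.
have -> : 'C(j, r) * 'C(r, k) * (k`! * (r - k)`! * (j - r)`!) = 'C(j, r) * ('C(r, k) * (k`! * (r - k)`!)) * (j - r)`! by ring.
have -> : 'C(j, k) * 'C(j - k, r - k) * (k`! * (r - k)`! * (j - r)`!) = 'C(j, k) * k`! * ('C(j - k, r - k) * ((r - k)`! * (j - r)`!)) by ring.
by rewrite e2 e3 -!mulnA e1 e4.
Qed.

Local Open Scope ring_scope.

Lemma alt_sum m : \sum_(i < m.+1) (-1) ^+ i * ('C(m, i))%:Z = (m == 0%N)%:Z.
Proof.
have := exprDn 1 (-1 : int) m; rewrite subrr expr0n natz => ->.
apply: eq_bigr => i _; rewrite expr1n mul1r -mulr_natr natz //.
Qed.

Lemma bin_mul' j r k : (k <= r)%N -> (k <= j)%N -> ('C(r, k) * 'C(j, r) = 'C(j, k) * 'C(j - k, r - k))%N.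
Proof.
move=> kr kj; case: (leqP r j) => rj; first by rewrite mulnC bin_mul.
by rewrite (bin_small rj) (@bin_small (j - k)) ?muln0 //; lia.
Qed.

Lemma binv n j k : (j <= n)%N -> (k <= n)%N ->
  \sum_(k <= r < n.+1) (-1) ^+ (r - k) * ('C(r, k))%:Z * ('C(j, r))%:Z = (j == k)%:Z.
Proof.
move=> jn kn; case: (ltnP j k) => jk.
  rewrite big1_seq; last first.
    move=> r /andP [_]; rewrite mem_iota => /andP [kr _].
    by rewrite (@bin_small j r) ?mulr0 //; lia.
  by rewrite (_ : (j == k) = false) //; apply/negbTE; rewrite neq_ltn jk.
transitivity (('C(j, k))%:Z * \sum_(k <= r < n.+1) (-1) ^+ (r - k) * ('C(j - k, r - k))%:Z).
  rewrite big_distrr /=; apply: eq_big_seq => r; rewrite mem_iota => /andP [kr _].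
  by rewrite -mulrA -PoszM bin_mul' // PoszM; ring.
have sh : \sum_(k <= r < n.+1) (-1) ^+ (r - k) * ('C(j - k, r - k))%:Z = \sum_(0 <= i < n.+1 - k) (-1) ^+ i * ('C(j - k, i))%:Z.
  by rewrite -{1}[k]add0n big_addn; apply: eq_bigr => i _; rewrite addnK.
rewrite sh (big_cat_nat (n := (j - k).+1)) //=; last by lia.
rewrite [X in _ + X]big1_seq ?addr0; last first.
  move=> i /andP [_]; rewrite mem_iota => /andP [ji _].
  by rewrite (@bin_small (j - k)) ?mulr0 //; lia.
rewrite big_mkord.
rewrite alt_sum subn_eq0.
case: (eqVneq j k) => [->|ne]; first by rewrite leqnn binn mul1r.
by rewrite (_ : (j <= k)%N = false) ?mulr0 //; apply/negbTE; rewrite -ltnNge ltn_neqAle eq_sym ne jk.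
Qed.
Import GRing.Theory.
Local Open Scope ring_scope.

Lemma Posz_sum (I : Type) (s : seq I) (P : pred I) (F : I -> nat) :
  ((\sum_(i <- s | P i) F i)%N)%:Z = \sum_(i <- s | P i) (F i)%:Z.
Proof. by apply: (big_morph Posz PoszD). Qed.

Lemma invert n k (e : nat -> int) : (k <= n)%N ->
  \sum_(k <= r < n.+1) (-1) ^+ (r - k) * ('C(r, k))%:Z * (\sum_(j < n.+1) ('C(j, r))%:Z * e j) = e k.
Proof.
move=> kn.
under eq_bigr do rewrite big_distrr /=.
rewrite exchange_big /=.
transitivity (\sum_(j < n.+1) e j * (j == k :> nat)%:Z).
  apply: eq_bigr => j _.
  rewrite -(binv (ltnSE (ltn_ord j)) kn) big_distrr /=; apply: eq_bigr => r _; ring.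
have kn1 : (k < n.+1)%N by [].
rewrite (bigD1 (Ordinal kn1)) //= eqxx mulr1 big1 ?addr0 // => j jk.
rewrite (_ : (j == k :> nat) = false) ?mulr0 //; apply/negbTE.
by apply: contra jk => /eqP e'; apply/eqP/val_inj.
Qed.

Definition Sz n r := ((\sum_(R : {set 'I_n} | #|R| == r) #|AR R|)%N)%:Z.

Lemma main_inv n k : (k <= n)%N ->
  (ccount n k)%:Z = \sum_(k <= r < n.+1) (-1) ^+ (r - k) * ('C(r, k))%:Z * Sz n r.
Proof.
move=> kn; rewrite -(invert (fun j => (ccount n j)%:Z) kn); apply: eq_bigr => r _.
rewrite /Sz sumAR Posz_sum; congr (_ * _); apply: eq_bigr => j _; by rewrite PoszM.
Qed.

Lemma sum_const_R n r (c : nat) :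
  (\sum_(R : {set 'I_n} | #|R| == r) c = 'C(n, r) * c)%N.
Proof.
rewrite -[in RHS](card_ord n) -card_draws -sum1_card big_distrl /= mul1n.
by apply: eq_bigl => R; rewrite inE.
Qed.

Lemma Sz_ge2 n r : (2 <= r)%N -> Sz n r = ('C(n, r))%:Z * (2 + 2 ^+ (r + 1) * (2 ^+ (2 ^ (n - r)) - 1)).
Proof.
move=> r2; rewrite /Sz.
rewrite (eq_bigr (fun _ => (2 + 2 ^ r * (2 * (2 ^ (2 ^ (n - r)) - 1)))%N)); last first.
  by move=> R /eqP Rr; rewrite card_AR2 Rr.
rewrite sum_const_R PoszM PoszD PoszM PoszM -subzn ?expn_gt0 //.
rewrite -!natz !natrX exprD expr1; ring.
Qed.

Lemma Sz_1 n : Sz n 1 = n%:Z * (4 * 2 ^+ (2 ^ (n - 1)) - 4).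
Proof.
rewrite /Sz.
rewrite (eq_bigr (fun _ => (4 * 2 ^ (2 ^ (n - 1)) - 4)%N)); last first.
  move=> R /cards1P [i ->]; rewrite -(card_AR1 i) addnK //.
rewrite sum_const_R bin1 PoszM -subzn; last first.
  by rewrite leq_pmulr ?expn_gt0.
by rewrite PoszM -!natz natrX.
Qed.
Import GRing.Theory.
Local Open Scope ring_scope.

Theorem mainTheorem8 (n k : nat) (hn : (1 <= n)%N) (hk1 : (1 <= k)%N) (hkn : (k <= n)%N) :
  [/\ ((1 < k)%N -> (k < n)%N ->
        (ccount n k)%:Z =
        \sum_(k <= r < n.+1)
          ('C(r, k))%:Z * (-1) ^+ (r - k) * ('C(n, r))%:Z * 2 ^+ (r + 1)
            * (2 ^+ (2 ^ (n - r)) - 1)),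
      ((1 < k)%N -> k = n -> (ccount n n)%:Z = 2 + 2 ^+ (n + 1)),
      (k = 1%N -> (1 < n)%N ->
        (ccount n 1)%:Z =
        (2 * n%:Z) * (2 ^+ (1 + 2 ^ (n - 1)) - 3)
        + \sum_(2 <= r < n.+1)
            r%:Z * (-1) ^+ (r - 1) * ('C(n, r))%:Z * 2 ^+ (r + 1)
              * (2 ^+ (2 ^ (n - r)) - 1))
    & (k = 1%N -> n = 1%N -> (ccount n 1)%:Z = 4)].
Proof.
split.
- move=> k1 kn; rewrite main_inv //.
  transitivity (\sum_(k <= r < n.+1) ((-1) ^+ (r - k) * ('C(r, k))%:Z * ('C(n, r))%:Z) * 2
    + \sum_(k <= r < n.+1) ('C(r, k))%:Z * (-1) ^+ (r - k) * ('C(n, r))%:Z * 2 ^+ (r + 1)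
            * (2 ^+ (2 ^ (n - r)) - 1)).
    rewrite -big_split /=; apply: eq_big_nat => r /andP [kr _].
    rewrite Sz_ge2; [ring | exact: leq_trans kr].
  rewrite -big_distrl /= binv // (_ : (n == k) = false) ?mul0r ?add0r //.
  by apply/negbTE; rewrite neq_ltn kn orbT.
- move=> k1 kn; subst k; rewrite main_inv // big_nat1 subnn expr0 binn mul1r Sz_ge2 //.
  rewrite subnn expn0 expr1 (_ : (2:int) - 1 = 1) // mulr1 binn; rewrite -[Posz 1]/(1:int) !mul1r //.
- move=> k1 n1; subst k; rewrite main_inv // big_ltn // subnn expr0 bin1 mul1r Sz_1.
  have h := binv (leqnn n) hn; rewrite big_ltn // subnn expr0 bin1 -[Posz 1]/(1:int) !mul1r in h.
  rewrite -[Posz 1]/(1:int) !mul1r.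
  transitivity (n%:Z * (4 * 2 ^+ (2 ^ (n - 1)) - 4) +
    (\sum_(2 <= r < n.+1) ((-1) ^+ (r - 1) * ('C(r, 1))%:Z * ('C(n, r))%:Z) * 2
    + \sum_(2 <= r < n.+1) r%:Z * (-1) ^+ (r - 1) * ('C(n, r))%:Z * 2 ^+ (r + 1)
              * (2 ^+ (2 ^ (n - r)) - 1))).
    congr (_ + _); rewrite -big_split /=; apply: eq_big_nat => r /andP [r2 _].
    by rewrite Sz_ge2 // bin1; ring.
  rewrite -big_distrl /=.
  have -> : \sum_(2 <= r < n.+1) ((-1) ^+ (r - 1) * ('C(r, 1))%:Z * ('C(n, r))%:Z) = - n%:Z.
    have e1 : (('C(n, 1))%:Z = n%:Z) by rewrite bin1.
    apply/eqP; rewrite -subr_eq0 opprK addrC -e1; apply/eqP; rewrite h.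
    by rewrite (_ : (n == 1%N) = false) //; apply/negbTE; rewrite neq_ltn n1 orbT.
  rewrite addrA; congr (_ + _); rewrite exprD expr1; ring.
- move=> k1 n1; subst k n; rewrite main_inv // big_nat1 subnn expr0 bin1 mul1r Sz_1.
  by [].
Qed.
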